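(* The generating function $G(z,x)$ is algebraic of degree $4$ and \[ G(z,x)=\frac{2\left(1-\sqrt{1-4xz^2}\right)}{\sqrt{1-4xz^2}\left(\sqrt{1-4z^2}+\sqrt{1-4xz^2}\right)^2}. \]
   Context: A bicolored Dyck path is a finite sequence of steps from $\{U_1,U_2,D\}$ ($U_1,U_2$ raise the height by $1$, $D$ lowers it by $1$) starting and ending at height $0$ and never going below height $0$; its length is its number of steps, and its up-steps are its $U_1$ and $U_2$ steps. For a bicolored Dyck path containing exactly one $U_2$ step, its weight is $p$, where the $U_2$ step is the $p$-th step of the path. Let $g_{n,m}$ be the total weight of bicolored Dyck paths of length $n$ with exactly one $U_2$ step such that this $U_2$ step is the $m$-th up-step of the path, and $G(z,x)=\sum_{n,m\ge 0}g_{n,m}z^nx^m$. *)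

(* Defs.v *)
From Stdlib Require Import Reals ZArith.
From Coquelicot Require Import Coquelicot.
From mathcomp Require Import all_boot.

Set Implicit Arguments.
Unset Strict Implicit.
Unset Printing Implicit Defensive.

Definition step := 'I_3.
Definition U1 : step := @Ordinal 3 0 isT.
Definition U2 : step := @Ordinal 3 1 isT.
Definition Dstep : step := @Ordinal 3 2 isT.

Definition is_up (s : step) : bool := (s == U1) || (s == U2).

Fixpoint dyck_from (h : nat) (s : seq step) : bool :=
  match s with
  | [::] => h == 0%N
  | a :: t => if a == Dstep then (0 < h)%N && dyck_from h.-1 t
              else dyck_from h.+1 t
  end.

Definition is_dyck (s : seq step) : bool := dyck_from 0 s.

Definition u2_pos (s : seq step) : nat := (index U2 s).+1.

Definition u2_uprank (s : seq step) : nat := count is_up (take (u2_pos s) s).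

(* g_{n,m}: total weight of bicolored Dyck paths of length n with exactly one
   U_2 step, this U_2 step being the m-th up-step; the weight is the position
   of the U_2 step. *)
Definition g (n m : nat) : nat :=
  \sum_(t : n.-tuple step | [&& is_dyck t, count (pred1 U2) t == 1%N
                                 & u2_uprank t == m]) u2_pos t.

Local Open Scope R_scope.

(* n-th term (in z) of G(z,x) = sum_{n,m} g_{n,m} z^n x^m; since g_{n,m} = 0
   for m > n, the inner sum over m is finite (m = 0..n). *)
Definition G_term (z x : R) (n : nat) : R :=
  z ^ n * sum_f_R0 (fun m => INR (g n m) * x ^ m) n.

Definition G (z x : R) : R := Series (G_term z x).

Definition near00 (P : R -> R -> Prop) : Prop :=
  exists eps : R, 0 < eps /\
    forall z x : R, Rabs z < eps -> Rabs x < eps -> P z x.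

Definition poly3_eval (d N : nat) (c : nat -> nat -> nat -> Z) (z x y : R) : R :=
  sum_f_R0 (fun k =>
    sum_f_R0 (fun i => sum_f_R0 (fun j => IZR (c k i j) * z ^ i * x ^ j) N) N
    * y ^ k) d.

Definition algebraic_of_degree (d : nat) (F : R -> R -> R) : Prop :=
  (exists (N : nat) (c : nat -> nat -> nat -> Z),
      (exists i j : nat, (i <= N)%nat /\ (j <= N)%nat /\ c d i j <> 0%Z) /\
      near00 (fun z x => poly3_eval d N c z x (F z x) = 0)) /\
  (forall (d' N : nat) (c : nat -> nat -> nat -> Z), (d' < d)%nat ->
      near00 (fun z x => poly3_eval d' N c z x (F z x) = 0) ->
      forall k i j : nat, (k <= d')%nat -> (i <= N)%nat -> (j <= N)%nat ->
        c k i j = 0%Z).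

Definition G_closed_form (z x : R) : R :=
  2 * (1 - sqrt (1 - 4 * x * z ^ 2)) /
  (sqrt (1 - 4 * x * z ^ 2) *
   (sqrt (1 - 4 * z ^ 2) + sqrt (1 - 4 * x * z ^ 2)) ^ 2).

(* Main.v *)
Require Import Defs.
From Stdlib Require Import Reals ZArith.
From Coquelicot Require Import Coquelicot.
From mathcomp Require Import all_boot.
Local Open Scope R_scope.
From Stdlib Require Import Lra Lia.
From HB Require Import structures.


HB.instance Definition _ := Monoid.isComLaw.Build R 0 Rplus (fun a b c => esym (Rplus_assoc a b c)) Rplus_comm Rplus_0_l.

Definition tsum (n : nat) (f : seq step -> R) : R :=
  \big[Rplus/0]_(t : n.-tuple step) f (tval t).

Lemma tsum0 f : tsum 0 f = f [::].
Proof.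
rewrite /tsum (big_pred1 [tuple]) // => t.
have -> : t = [tuple] by apply: tuple0.
by symmetry; apply: eqxx.
Qed.

Lemma tsum_ext n f g : (forall t, f t = g t) -> tsum n f = tsum n g.
Proof. by move=> H; apply: eq_bigr => t _; apply: H. Qed.

Lemma tsum_add n f g : tsum n (fun t => f t + g t) = tsum n f + tsum n g.
Proof. by rewrite /tsum big_split. Qed.

Lemma tsum_scal n c f : tsum n (fun t => c * f t) = c * tsum n f.
Proof.
rewrite /tsum; symmetry.
apply: (big_endo (fun v => c * v)); first by move=> a b; rewrite Rmult_plus_distr_l.
by rewrite Rmult_0_r.
Qed.

Lemma tsum_zero n : tsum n (fun _ => 0) = 0.
Proof. by rewrite /tsum big1. Qed.

Lemma sum_step (F : step -> R) : \big[Rplus/0]_(a : step) F a = F U1 + F U2 + F Dstep.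
Proof.
rewrite /step big_ord_recl big_ord_recl big_ord_recl big_ord0.
rewrite Rplus_0_r Rplus_assoc; congr (F _ + (F _ + F _)); by apply: val_inj.
Qed.

Lemma tsum_cons n f : tsum n.+1 f =
  tsum n (fun t => f (U1 :: t)) + tsum n (fun t => f (U2 :: t)) + tsum n (fun t => f (Dstep :: t)).
Proof.
rewrite /tsum.
rewrite -(sum_step (fun a => \big[Rplus/0]_(t : n.-tuple step) f (a :: t))).
rewrite pair_big /=.
rewrite (reindex (fun p : step * n.-tuple step => cons_tuple p.1 p.2)) //=.
exists (fun t : n.+1.-tuple step => (thead t, behead_tuple t)).
  by move=> [a t] _ /=; congr pair; apply: val_inj.
move=> t _; rewrite [in RHS](tuple_eta t); apply: val_inj => //.
Qed.

Lemma U1D : (U1 == Dstep) = false. Proof. by []. Qed.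
Lemma U2D : (U2 == Dstep) = false. Proof. by []. Qed.
Lemma DD : (Dstep == Dstep) = true. Proof. by []. Qed.
Lemma U1U2 : (U1 == U2) = false. Proof. by []. Qed.
Lemma U2U2 : (U2 == U2) = true. Proof. by []. Qed.
Lemma DU2 : (Dstep == U2) = false. Proof. by []. Qed.

Lemma cnt_cons a t : count (pred1 U2) (a :: t) = ((a == U2) + count (pred1 U2) t)%N.
Proof. by []. Qed.

Lemma pos_cons a t : u2_pos (a :: t) = if a == U2 then 1%N else (u2_pos t).+1.
Proof. by rewrite /u2_pos /=; case: (a == U2). Qed.

Lemma up_cons a t : u2_uprank (a :: t) = if a == U2 then 1%N else (is_up a + u2_uprank t)%N.
Proof.
rewrite /u2_uprank pos_cons; case: eqP => [->|_] /=; by rewrite ?take0.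
Qed.

Fixpoint EE (n h : nat) : R :=
  match n with
  | 0 => if h == 0%N then 1 else 0
  | n'.+1 => EE n' h.+1 + (if h is h'.+1 then EE n' h' else 0)
  end.

Fixpoint FF (x : R) (n h : nat) : R :=
  match n with
  | 0 => 0
  | n'.+1 => x * FF x n' h.+1 + (if h is h'.+1 then FF x n' h' else 0) + x * EE n' h.+1
  end.

Fixpoint HH (x : R) (n h : nat) : R :=
  match n with
  | 0 => 0
  | n'.+1 => x * (HH x n' h.+1 + FF x n' h.+1)
             + (if h is h'.+1 then HH x n' h' + FF x n' h' else 0) + x * EE n' h.+1
  end.

Definition Et n h := tsum n (fun t => if dyck_from h t && (count (pred1 U2) t == 0%N) then 1 else 0).
Definition Ft x n h := tsum n (fun t => if dyck_from h t && (count (pred1 U2) t == 1%N)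
                                       then x ^ u2_uprank t else 0).
Definition Ht x n h := tsum n (fun t => if dyck_from h t && (count (pred1 U2) t == 1%N)
                                       then INR (u2_pos t) * x ^ u2_uprank t else 0).

Lemma Et_EE n h : Et n h = EE n h.
Proof.
elim: n h => [|n IH] h; first by rewrite /Et tsum0 /=; case: (h == 0%N).
rewrite /Et tsum_cons /=.
under tsum_ext => t do rewrite add0n.
under [X in _ + X + _]tsum_ext => t do rewrite add1n andbF.
under [X in _ + X]tsum_ext => t do rewrite add0n.
rewrite tsum_zero Rplus_0_r -/(Et n h.+1) IH.
case: h => [|h] /=; first by rewrite tsum_zero.
by rewrite -/(Et n h) IH.
Qed.

Lemma dyck_U1 h t : dyck_from h (U1 :: t) = dyck_from h.+1 t. Proof. by []. Qed.
Lemma dyck_U2 h t : dyck_from h (U2 :: t) = dyck_from h.+1 t. Proof. by []. Qed.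
Lemma dyck_D0 t : dyck_from 0 (Dstep :: t) = false. Proof. by []. Qed.
Lemma dyck_DS h t : dyck_from h.+1 (Dstep :: t) = dyck_from h t. Proof. by []. Qed.
Lemma pos_U1 t : u2_pos (U1 :: t) = (u2_pos t).+1. Proof. by rewrite pos_cons. Qed.
Lemma pos_U2 t : u2_pos (U2 :: t) = 1%N. Proof. by rewrite pos_cons. Qed.
Lemma pos_D t : u2_pos (Dstep :: t) = (u2_pos t).+1. Proof. by rewrite pos_cons. Qed.
Lemma up_U1 t : u2_uprank (U1 :: t) = (u2_uprank t).+1. Proof. by rewrite up_cons. Qed.
Lemma up_U2 t : u2_uprank (U2 :: t) = 1%N. Proof. by rewrite up_cons. Qed.
Lemma up_D t : u2_uprank (Dstep :: t) = u2_uprank t. Proof. by rewrite up_cons. Qed.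
Lemma cnt_U1 t : count (pred1 U2) (U1 :: t) = count (pred1 U2) t. Proof. by []. Qed.
Lemma cnt_U2 t : count (pred1 U2) (U2 :: t) = (count (pred1 U2) t).+1. Proof. by []. Qed.
Lemma cnt_D t : count (pred1 U2) (Dstep :: t) = count (pred1 U2) t. Proof. by []. Qed.

Lemma Ft_FF x n h : Ft x n h = FF x n h.
Proof.
elim: n h => [|n IH] h.
  by rewrite /Ft tsum0 /= andbF.
rewrite /Ft tsum_cons.
under tsum_ext => t do rewrite dyck_U1 cnt_U1 up_U1.
under [X in _ + X + _]tsum_ext => t do rewrite dyck_U2 cnt_U2 up_U2 eqSS.
rewrite (@tsum_ext _ _ (fun t => x * (if dyck_from h.+1 t && (count (pred1 U2) t == 1%N)
                                       then x ^ u2_uprank t else 0))); last first.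
  by move=> t; case: (_ && _); rewrite /= ?Rmult_0_r.
rewrite tsum_scal -/(Ft x n h.+1) IH.
rewrite (@tsum_ext _ _ (fun t => x * (if dyck_from h.+1 t && (count (pred1 U2) t == 0%N)
                                       then 1 else 0))); last first.
  by move=> t; case: (_ && _); rewrite /= ?Rmult_0_r ?Rmult_1_r.
rewrite tsum_scal -/(Et n h.+1) Et_EE [RHS]/=.
case: h => [|h].
  under tsum_ext => t do rewrite dyck_D0.
  by rewrite tsum_zero; ring.
under tsum_ext => t do rewrite dyck_DS cnt_D up_D.
rewrite -/(Ft x n h) IH; ring.
Qed.

Lemma Ht_HH x n h : Ht x n h = HH x n h.
Proof.
elim: n h => [|n IH] h.
  by rewrite /Ht tsum0 /= andbF.
rewrite /Ht tsum_cons.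
under tsum_ext => t do rewrite dyck_U1 cnt_U1 up_U1 pos_U1.
under [X in _ + X + _]tsum_ext => t do rewrite dyck_U2 cnt_U2 up_U2 pos_U2 eqSS.
rewrite (@tsum_ext _ _ (fun t => x * ((if dyck_from h.+1 t && (count (pred1 U2) t == 1%N)
                                       then INR (u2_pos t) * x ^ u2_uprank t else 0) +
                                      (if dyck_from h.+1 t && (count (pred1 U2) t == 1%N)
                                       then x ^ u2_uprank t else 0)))); last first.
  by move=> t; case: (_ && _); rewrite ?S_INR /=; ring.
rewrite tsum_scal tsum_add -/(Ht x n h.+1) -/(Ft x n h.+1) IH Ft_FF.
rewrite (@tsum_ext _ _ (fun t => x * (if dyck_from h.+1 t && (count (pred1 U2) t == 0%N)
                                       then 1 else 0))); last first.
  by move=> t; case: (_ && _); rewrite /=; ring.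
rewrite tsum_scal -/(Et n h.+1) Et_EE [RHS]/=.
case: h => [|h].
  under tsum_ext => t do rewrite dyck_D0.
  by rewrite tsum_zero; ring.
under tsum_ext => t do rewrite dyck_DS cnt_D up_D pos_D.
rewrite (@tsum_ext _ _ (fun t => ((if dyck_from h t && (count (pred1 U2) t == 1%N)
                                       then INR (u2_pos t) * x ^ u2_uprank t else 0) +
                                      (if dyck_from h t && (count (pred1 U2) t == 1%N)
                                       then x ^ u2_uprank t else 0)))); last first.
  by move=> t; case: (_ && _); rewrite ?S_INR /=; ring.
rewrite tsum_add -/(Ht x n h) -/(Ft x n h) IH Ft_FF; ring.
Qed.

Lemma sum_f_big f n : sum_f_R0 f n = \big[Rplus/0]_(m < n.+1) f m.
Proof.
elim: n => [|n IH] /=; first by rewrite big_ord_recr big_ord0 /= Rplus_0_l.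
by rewrite big_ord_recr /= IH.
Qed.

Lemma big_mulr_R (I : finType) (P : pred I) (F : I -> R) c :
  \big[Rplus/0]_(i | P i) F i * c = \big[Rplus/0]_(i | P i) (F i * c).
Proof.
apply: (big_endo (fun v => v * c)); first by move=> a b; rewrite Rmult_plus_distr_r.
by rewrite Rmult_0_l.
Qed.

Lemma up_le n (t : n.-tuple step) : (u2_uprank t <= n)%N.
Proof.
rewrite /u2_uprank; apply: (leq_trans (count_size _ _)).
by rewrite size_take_min size_tuple geq_minr.
Qed.

Lemma Gsum_HH x n : sum_f_R0 (fun m => INR (g n m) * x ^ m) n = HH x n 0.
Proof.
rewrite -Ht_HH /Ht /tsum sum_f_big.
have E : forall m, INR (g n m) * x ^ m = \big[Rplus/0]_(t : n.-tuple step)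
   (if (is_dyck t && (count (pred1 U2) t == 1%N)) && (u2_uprank t == m)
    then INR (u2_pos t) * x ^ m else 0).
  move=> m; rewrite /g (big_morph INR plus_INR (erefl (INR 0))) big_mulr_R big_mkcond /=.
  apply: eq_bigr => t _; rewrite andbA; case: (_ && _) => //; by rewrite Rmult_0_l.
under eq_bigr => m _ do rewrite E.
rewrite exchange_big /=.
apply: eq_bigr => t _.
rewrite /is_dyck; case: (_ && _) => /=; last by rewrite big1.
have Hup : (u2_uprank t < n.+1)%N by rewrite ltnS up_le.
rewrite (bigD1 (Ordinal Hup)) //= eqxx big1 ?Rplus_0_r //.
move=> m Hm; case: eqP => // Em; exfalso; move/eqP: Hm; apply; apply: val_inj => /=.
by rewrite Em.
Qed.

Lemma gen_ser (a : nat -> R) z : (forall n, Rabs (a n) <= 8^n) -> Rabs z <= /16 ->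
  ex_series (fun n => a n * z^n) /\ ex_series (fun n => Rabs (a n * z^n)) /\
  Rabs (Series (fun n => a n * z^n)) <= 2.
Proof.
move=> Ha Hz.
have B : forall n, Rabs (a n * z^n) <= (/2)^n.
  move=> n; rewrite Rabs_mult -RPow_abs.
  have H1 : Rabs z ^ n <= (/16)^n by apply: pow_incr; split; [apply: Rabs_pos| ].
  have -> : (/2)^n = 8^n * (/16)^n by rewrite -Rpow_mult_distr; f_equal; field.
  apply: Rmult_le_compat => //; [apply Rabs_pos | apply pow_le, Rabs_pos].
have G : ex_series (fun n => (/2)^n) by apply: ex_series_geom; rewrite Rabs_pos_eq; lra.
have A : ex_series (fun n => Rabs (a n * z^n)).
  apply: (ex_series_le _ (fun n => (/2)^n)) => // n.
  rewrite /norm /= /abs /= Rabs_Rabsolu; apply B.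
split; first exact: ex_series_Rabs.
split => //.
apply: Rle_trans (Series_Rabs _ A) _.
apply: Rle_trans (Series_le _ (fun n => (/2)^n) _ G) _.
  by move=> n; split; [apply Rabs_pos | apply B].
rewrite (is_series_unique _ _ (is_series_geom (/2) _)); [lra | rewrite Rabs_pos_eq; lra].
Qed.

Lemma Rabs3 a b c : Rabs (a + b + c) <= Rabs a + Rabs b + Rabs c.
Proof.
apply: Rle_trans (Rabs_triang _ _) _.
have := Rabs_triang a b; lra.
Qed.

Lemma bnd x n : Rabs x <= 1 -> forall h,
  Rabs (EE n h) <= 8^n /\ Rabs (FF x n h) <= 8^n /\ Rabs (HH x n h) <= 8^n.
Proof.
move=> Hx; elim: n => [|n IH] h /=.
  split; first by case: (h == 0%N); rewrite ?Rabs_R1 ?Rabs_R0; lra.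
  by rewrite Rabs_R0; lra.
have P8 := pow_le 8 n ltac:(lra).
have M : forall v B, Rabs v <= B -> Rabs (x * v) <= B.
  move=> v B Hv; rewrite Rabs_mult; have := Rabs_pos v; have := Rabs_pos x; nra.
have [E1 [F1 H1]] := IH h.+1.
have [E0 [F0 H0]] : Rabs (if h is h'.+1 then EE n h' else 0) <= 8^n /\
   Rabs (if h is h'.+1 then FF x n h' else 0) <= 8^n /\
   Rabs (if h is h'.+1 then HH x n h' + FF x n h' else 0) <= 2 * 8^n.
  clear E1 F1 H1; case: h => [|h']; first by rewrite Rabs_R0; lra.
  have [a [b c]] := IH h'; split; [|split]; try lra.
  by apply: Rle_trans (Rabs_triang _ _) _; lra.
split; [|split].
- by apply: Rle_trans (Rabs_triang _ _) _; lra.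
- apply: Rle_trans (Rabs3 _ _ _) _.
  have := M _ _ F1; have := M _ _ E1; lra.
- apply: Rle_trans (Rabs3 _ _ _) _.
  have : Rabs (HH x n h.+1 + FF x n h.+1) <= 2 * 8^n.
    by apply: Rle_trans (Rabs_triang _ _) _; lra.
  move/M => ?; have := M _ _ E1; lra.
Qed.

Definition SE z h := Series (fun n => EE n h * z^n).
Definition SF x z h := Series (fun n => FF x n h * z^n).
Definition SH x z h := Series (fun n => HH x n h * z^n).

Section Ser.
Variables (x z : R).
Hypothesis hx : Rabs x <= 1.
Hypothesis hz : Rabs z <= /16.

Lemma exE h : ex_series (fun n => EE n h * z^n) /\ Rabs (SE z h) <= 2.
Proof.
have [A [_ C]] := gen_ser (fun n => EE n h) z (fun n => proj1 (bnd x n hx h)) hz.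
by split.
Qed.
Lemma exF h : ex_series (fun n => FF x n h * z^n) /\ Rabs (SF x z h) <= 2.
Proof.
have [A [_ C]] := gen_ser (fun n => FF x n h) z (fun n => proj1 (proj2 (bnd x n hx h))) hz.
by split.
Qed.
Lemma exH h : ex_series (fun n => HH x n h * z^n) /\ Rabs (SH x z h) <= 2.
Proof.
have [A [_ C]] := gen_ser (fun n => HH x n h) z (fun n => proj2 (proj2 (bnd x n hx h))) hz.
by split.
Qed.

Lemma shift (a : nat -> R) : ex_series (fun n => a n * z^n) ->
  Series (fun n => a n * z^n) = a 0%nat + z * Series (fun n => a (S n) * z^n).
Proof.
move=> H; rewrite Series_incr_1 //= Rmult_1_r -Series_scal_l; f_equal.
by apply Series_ext => n /=; ring.
Qed.

Lemma ser_add (a b : nat -> R) : ex_series (fun n => a n * z^n) -> ex_series (fun n => b n * z^n) ->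
  Series (fun n => (a n + b n) * z^n) = Series (fun n => a n * z^n) + Series (fun n => b n * z^n).
Proof.
move=> A B; rewrite -Series_plus //; apply Series_ext => n; ring.
Qed.

Lemma ser_scal (a : nat -> R) c :
  Series (fun n => (c * a n) * z^n) = c * Series (fun n => a n * z^n).
Proof.
rewrite -Series_scal_l; apply Series_ext => n; ring.
Qed.

Lemma exsc (a : nat -> R) c : ex_series (fun n => a n * z^n) -> ex_series (fun n => (c * a n) * z^n).
Proof.
move=> A; apply: ex_series_ext (ex_series_scal_l c _ A) => n.
rewrite /scal /= /mult /=; ring.
Qed.

Lemma exad (a b : nat -> R) : ex_series (fun n => a n * z^n) -> ex_series (fun n => b n * z^n) ->
  ex_series (fun n => (a n + b n) * z^n).
Proof.
move=> A B; apply: ex_series_ext (ex_series_plus _ _ A B) => n.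
rewrite /plus /=; ring.
Qed.

Lemma SE_0 : SE z 0 = 1 + z * SE z 1.
Proof.
rewrite /SE shift; last by case: (exE 0).
by rewrite /=; f_equal; f_equal; apply Series_ext => n; rewrite Rplus_0_r.
Qed.

Lemma SE_S h : SE z h.+1 = z * (SE z h.+2 + SE z h).
Proof.
rewrite /SE shift; last by case: (exE h.+1).
rewrite /= Rplus_0_l ser_add //; [by case: (exE h.+2) | by case: (exE h)].
Qed.

Lemma SF_0 : SF x z 0 = z * (x * SF x z 1 + x * SE z 1).
Proof.
rewrite /SF shift; last by case: (exF 0).
rewrite /= Rplus_0_l; f_equal.
rewrite (Series_ext _ (fun n => (x * FF x n 1 + x * EE n 1) * z^n)); last by move=> n; ring.
rewrite ser_add; try apply: exsc; [by rewrite !ser_scal| by case: (exF 1) | by case: (exE 1)].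
Qed.

Lemma SF_S h : SF x z h.+1 = z * (x * SF x z h.+2 + SF x z h + x * SE z h.+2).
Proof.
rewrite /SF shift; last by case: (exF h.+1).
rewrite /= Rplus_0_l; f_equal.
rewrite ser_add; first last.
- by apply: exsc; case: (exE h.+2).
- by apply: exad; [apply: exsc; case: (exF h.+2) | case: (exF h)].
rewrite ser_add; [by rewrite !ser_scal | by apply: exsc; case: (exF h.+2) | by case: (exF h)].
Qed.

Lemma SH_0 : SH x z 0 = z * (x * (SH x z 1 + SF x z 1) + x * SE z 1).
Proof.
rewrite /SH shift; last by case: (exH 0).
rewrite /= Rplus_0_l; f_equal.
rewrite (Series_ext _ (fun n => (x * (HH x n 1 + FF x n 1) + x * EE n 1) * z^n)); last by move=> n; ring.
rewrite ser_add; first last.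
- by apply: exsc; case: (exE 1).
- by apply: exsc; apply: exad; [case: (exH 1) | case: (exF 1)].
rewrite !ser_scal ser_add //; [by case: (exH 1) | by case: (exF 1)].
Qed.

Lemma SH_S h : SH x z h.+1 = z * (x * (SH x z h.+2 + SF x z h.+2) + (SH x z h + SF x z h) + x * SE z h.+2).
Proof.
rewrite /SH shift; last by case: (exH h.+1).
rewrite /= Rplus_0_l; f_equal.
have eH2 : ex_series (fun n => HH x n h.+2 * z^n) by case: (exH h.+2).
have eF2 : ex_series (fun n => FF x n h.+2 * z^n) by case: (exF h.+2).
have eH : ex_series (fun n => HH x n h * z^n) by case: (exH h).
have eF : ex_series (fun n => FF x n h * z^n) by case: (exF h).
have eE : ex_series (fun n => EE n h.+2 * z^n) by case: (exE h.+2).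
rewrite ser_add; last by apply: exsc.
  rewrite ser_add; [|by apply: exsc; apply: exad | by apply: exad].
  by rewrite !ser_scal !ser_add.
by apply: exad; [apply: exsc; apply: exad | apply: exad].
Qed.

End Ser.

Lemma contr (d : nat -> R) q M : 0 <= q -> 2 * q < 1 -> (forall h, Rabs (d h) <= M) ->
  Rabs (d 0%nat) <= q * Rabs (d 1%nat) ->
  (forall h, Rabs (d h.+1) <= q * (Rabs (d h.+2) + Rabs (d h))) -> forall h, d h = 0.
Proof.
move=> q0 q1 HM H0 HS.
have M0 : 0 <= M by apply: Rle_trans (HM 0%nat); apply: Rabs_pos.
have K : forall k h, Rabs (d h) <= (2*q)^k * M.
  elim=> [|k IH] h; first by rewrite /= Rmult_1_l.
  have Pk : 0 <= (2*q)^k by apply: pow_le; lra.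
  case: h => [|h].
    apply: Rle_trans H0 _; have := Rmult_le_compat_l q _ _ q0 (IH 1%nat).
    have : 0 <= q * ((2*q)^k * M) by apply: Rmult_le_pos => //; apply: Rmult_le_pos.
    rewrite /=; lra.
  apply: Rle_trans (HS h) _.
  have := Rmult_le_compat_l q _ _ q0 (Rplus_le_compat _ _ _ _ (IH h.+2) (IH h)).
  rewrite /=; lra.
move=> h.
case: (Req_dec (d h) 0) => // Hne; exfalso.
have Hp : 0 < Rabs (d h) by apply: Rabs_pos_lt.
have [N HN] := pow_lt_1_zero (2*q) ltac:(rewrite Rabs_pos_eq; lra) (Rabs (d h) / (M + 1))
  ltac:(apply: Rdiv_lt_0_compat; lra).
have := HN N (le_n N); rewrite Rabs_pos_eq; last by apply: pow_le; lra.
move=> HN'.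
have := K N h.
have : (2*q)^N * M <= (2*q)^N * (M+1).
  by apply: Rmult_le_compat_l; [apply: pow_le; lra | lra].
have : (2*q)^N * (M+1) < Rabs (d h).
  have E : (2*q)^N * (M+1) = (2*q)^N * (M+1) by [].
  have Hm : (2*q)^N < Rabs (d h) / (M+1) by [].
  have := Rmult_lt_compat_r (M+1) _ _ ltac:(lra) Hm.
  by rewrite /Rdiv Rmult_assoc Rinv_l; [rewrite Rmult_1_r | lra].
lra.
Qed.

Definition eG z c0 h := z^h * c0^(h.+1).
Definition fG x z c0 c1 h := x / (1 - x) * z^h * (c0^(h.+1) - c1^(h.+1)).
Definition kG x z c0 c1 h := x / (1-x) / (c0 * z^2 * (1-x)) * z^h * (c0^(h.+1) - c1^(h.+1))
   + x/(1-x) * c1^2 / (c1 - 2) * INR h.+1 * z^h * c1^h.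

Section Alg.
Variables (x z c0 c1 : R).
Hypotheses (R0 : z^2 * c0^2 = c0 - 1) (R1 : x * z^2 * c1^2 = c1 - 1) (Hz : z <> 0)
  (Hc0 : c0 <> 0) (Hc1 : c1 <> 0) (Hc2 : c1 - 2 <> 0) (Hx : 1 - x <> 0).

Ltac alg :=
  let u := fresh "u" in
  let Ex := fresh "Ex" in let Ec0 := fresh "Ec0" in let Ez := fresh "Ez" in
  let Hx' := fresh "Hx'" in let Hu := fresh "Hu" in let H1u := fresh "H1u" in
  (have Ex : x = (c1 - 1) / (c1^2 * z^2) by (field_simplify_eq; [lra | split => //; apply: pow_nonzero => //]));
  set u := z * c0;
  (have Ec0 : c0 = 1 + u^2 by (rewrite /u; lra));
  (have Ez : z = u / (1 + u^2) by (rewrite -Ec0 /u; field));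
  (have Hx' : c1^2 * u^2 - (c1-1)*(1+u^2)^2 <> 0 by (
    rewrite -Ec0 /u -R1;
    (have -> : c1 ^ 2 * (z * c0) ^ 2 - x * z ^ 2 * c1 ^ 2 * c0 ^ 2 = c1^2 * z^2 * c0^2 * (1-x) by ring);
    repeat apply: Rmult_integral_contrapositive_currified => //; apply: pow_nonzero));
  (have Hu : u <> 0 by (rewrite /u; apply: Rmult_integral_contrapositive_currified));
  (have H1u : 1 + u^2 <> 0 by (rewrite -Ec0));
  clearbody u;
  rewrite Ex; clear Ex R1 Hx; rewrite Ez; clear Ez R0 Hz; rewrite Ec0; clear Ec0 Hc0;
  field; repeat split; try assumption; try (rewrite Rpow_mult_distr; assumption).

Lemma eG_0 : eG z c0 0 = 1 + z * eG z c0 1.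
Proof. rewrite /eG /=; nra. Qed.

Lemma eG_S h : eG z c0 h.+1 = z * (eG z c0 h.+2 + eG z c0 h).
Proof.
rewrite /eG /=; move: (z^h) (c0^h) => P Q.
apply Rminus_diag_uniq.
rewrite (_ : _ - _ = - (z*P*c0*Q) * (z^2*c0^2 - (c0-1))); first by rewrite R0; ring.
ring.
Qed.

Lemma fG_0 : fG x z c0 c1 0 = z * (x * fG x z c0 c1 1 + x * eG z c0 1).
Proof.
rewrite /fG /eG /=.
alg.
Qed.

Lemma fG_S h : fG x z c0 c1 h.+1 = z * (x * fG x z c0 c1 h.+2 + fG x z c0 c1 h + x * eG z c0 h.+2).
Proof.
rewrite /fG /eG /=; move: (z^h) (c0^h) (c1^h) => P Q0 Q1.
alg.
Qed.

Lemma kG_0 : kG x z c0 c1 0 = z * (x * (kG x z c0 c1 1 + fG x z c0 c1 1) + x * eG z c0 1).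
Proof.
rewrite /kG /fG /eG /=.
alg.
Qed.

Lemma kG_S h : kG x z c0 c1 h.+1 = z * (x * (kG x z c0 c1 h.+2 + fG x z c0 c1 h.+2)
   + (kG x z c0 c1 h + fG x z c0 c1 h) + x * eG z c0 h.+2).
Proof.
rewrite /kG /fG /eG !S_INR /=; move: (z^h) (c0^h) (c1^h) (INR h) => P Q0 Q1 H.
alg.
Qed.
End Alg.

Lemma kG0E x z c0 c1 : kG x z c0 c1 0 = x/(1-x)/(c0*z^2*(1-x))*(c0 - c1) + x/(1-x)*c1^2/(c1-2).
Proof. rewrite /kG /=; ring. Qed.

Lemma closed_eq x z : Rabs z <= /16 -> Rabs x <= /2 -> z <> 0 ->
  let s0 := sqrt (1 - 4 * z ^ 2) in let s1 := sqrt (1 - 4 * x * z ^ 2) in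
  kG x z (2 / (1 + s0)) (2 / (1 + s1)) 0 = G_closed_form z x.
Proof.
move=> hz hx z0 s0 s1.
rewrite kG0E /G_closed_form -/s0 -/s1.
have z2 : 0 < z^2 by apply: pow2_gt_0.
have z2' : z^2 <= /256.
  have : Rabs z ^ 2 <= (/16)^2 by apply: pow_incr; split => //; apply: Rabs_pos.
  by rewrite RPow_abs Rabs_pos_eq; [lra | apply: pow2_ge_0].
have hx' : -/2 <= x <= /2 by move: hx; rewrite /Rabs; case: Rcase_abs; lra.
have A0 : 0 < 1 - 4 * z^2 by lra.
have A1 : 0 < 1 - 4 * x * z^2 by nra.
have S0 : s0 * s0 = 1 - 4 * z^2 by apply: sqrt_sqrt; lra.
have S1 : s1 * s1 = 1 - 4 * x * z^2 by apply: sqrt_sqrt; lra.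
have P0 : 0 < s0 by apply: sqrt_lt_R0.
have P1 : 0 < s1 by apply: sqrt_lt_R0.
have Ez : z^2 = (1 - s0*s0)/4 by lra.
have Ex : x = (1 - s1*s1)/(1 - s0*s0) by rewrite S0 S1; field; lra.
have N : s1 * s1 - s0 * s0 <> 0 by rewrite S0 S1; nra.
have N2 : 1 - s0 * s0 <> 0 by lra.
clearbody s0 s1.
rewrite Ez Ex.
field; repeat split; lra.
Qed.

Lemma pow_le1 q h : 0 <= q <= 1 -> q ^ h <= 1.
Proof. move=> H; rewrite -(pow1 h); apply: pow_incr; lra. Qed.

Lemma pow_abs_le z c h : Rabs (z * c) <= 1 -> Rabs c <= 2 -> Rabs (z^h * c^(h.+1)) <= 2.
Proof.
move=> H1 H2.
have -> : z^h * c^(h.+1) = (z*c)^h * c by rewrite Rpow_mult_distr /=; ring.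
rewrite Rabs_mult -RPow_abs.
have : Rabs (z * c) ^ h <= 1 by apply: pow_le1; split => //; apply: Rabs_pos.
have := Rabs_pos c; have := pow_le (Rabs (z*c)) h (Rabs_pos _); nra.
Qed.

Lemma INR_pow_le q h : 0 <= q <= /2 -> INR h.+1 * q ^ h <= 1.
Proof.
move=> Hq; elim: h => [|h IH]; first by rewrite /=; lra.
rewrite !S_INR in IH *.
have := pow_le q h ltac:(lra).
have := pos_INR h.
rewrite /=; nra.
Qed.

Section Main.
Variables (x z : R).
Hypotheses (hz : Rabs z <= /16) (hx : Rabs x <= /2) (z0 : z <> 0).
Let s0 := sqrt (1 - 4 * z ^ 2).
Let s1 := sqrt (1 - 4 * x * z ^ 2).
Let c0 := 2 / (1 + s0).
Let c1 := 2 / (1 + s1).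

Let hx1 : Rabs x <= 1. Proof. lra. Qed.
Let hx' : -/2 <= x <= /2. Proof. by move: hx; rewrite /Rabs; case: Rcase_abs; lra. Qed.
Let hz' : -/16 <= z <= /16. Proof. by move: hz; rewrite /Rabs; case: Rcase_abs; lra. Qed.
Let z2 : 0 < z^2. Proof. by apply: pow2_gt_0. Qed.
Let z2' : z^2 <= /256.
Proof.
have : Rabs z ^ 2 <= (/16)^2 by apply: pow_incr; split => //; apply: Rabs_pos.
by rewrite RPow_abs Rabs_pos_eq; [lra | apply: pow2_ge_0].
Qed.
Let S0 : s0 * s0 = 1 - 4 * z^2. Proof. by apply: sqrt_sqrt; lra. Qed.
Let S1 : s1 * s1 = 1 - 4 * x * z^2. Proof. by apply: sqrt_sqrt; nra. Qed.
Let P0 : 0 < s0. Proof. by apply: sqrt_lt_R0; lra. Qed.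
Let P1 : 0 < s1. Proof. by apply: sqrt_lt_R0; nra. Qed.
Let C0 : 0 < c0 <= 2. Proof. rewrite /c0; split; [apply: Rdiv_lt_0_compat; lra|].
  apply: (Rmult_le_reg_r (1 + s0)); [lra | rewrite /Rdiv Rmult_assoc Rinv_l; lra]. Qed.
Let C1 : 0 < c1 <= 2. Proof. rewrite /c1; split; [apply: Rdiv_lt_0_compat; lra|].
  apply: (Rmult_le_reg_r (1 + s1)); [lra | rewrite /Rdiv Rmult_assoc Rinv_l; lra]. Qed.
Let C12 : c1 - 2 <> 0.
Proof. rewrite /c1 => E.
have E' : 2 / (1 + s1) = 2 by lra.
have := f_equal (fun v => v * (1 + s1)) E'; rewrite /= /Rdiv Rmult_assoc Rinv_l; lra.
Qed.
Let R0 : z^2 * c0^2 = c0 - 1.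
Proof.
rewrite /c0; have Ez : z^2 = (1 - s0*s0)/4 by lra.
rewrite Ez; field; lra.
Qed.
Let R1 : x * z^2 * c1^2 = c1 - 1.
Proof.
rewrite /c1; have Ez : x * z^2 = (1 - s1*s1)/4 by lra.
rewrite Ez; field; lra.
Qed.
Let X1 : 1 - x <> 0. Proof. lra. Qed.
Let C0n : c0 <> 0. Proof. lra. Qed.
Let C1n : c1 <> 0. Proof. lra. Qed.
Let zc0 : Rabs (z * c0) <= /8.
Proof. rewrite Rabs_mult (Rabs_pos_eq c0); [|lra]. have := Rabs_pos z. nra. Qed.
Let zc1 : Rabs (z * c1) <= /8.
Proof. rewrite Rabs_mult (Rabs_pos_eq c1); [|lra]. have := Rabs_pos z. nra. Qed.

Lemma SE_eq h : SE z h = eG z c0 h.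
Proof.
apply: Rminus_diag_uniq; move: h; apply: (contr (fun h => SE z h - eG z c0 h) (Rabs z) 4).
- by apply: Rabs_pos.
- lra.
- move=> h; apply: Rle_trans (Rabs_triang _ _) _; rewrite Rabs_Ropp.
  have := proj2 (exE x z hx1 hz h); have := pow_abs_le z c0 h ltac:(lra) ltac:(rewrite Rabs_pos_eq; lra).
  rewrite /eG; lra.
- rewrite (SE_0 x z hx1 hz) (eG_0 z c0 c1) //; have -> : 1 + z * SE z 1 - (1 + z * eG z c0 1) = z * (SE z 1 - eG z c0 1) by ring.
  by rewrite Rabs_mult; lra.
- move=> h; rewrite (SE_S x z hx1 hz) (eG_S z c0) //.
  have -> : z * (SE z h.+2 + SE z h) - z * (eG z c0 h.+2 + eG z c0 h) =
     z * ((SE z h.+2 - eG z c0 h.+2) + (SE z h - eG z c0 h)) by ring.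
  rewrite Rabs_mult; apply: Rmult_le_compat_l; [apply: Rabs_pos | apply: Rabs_triang].
Qed.

Lemma lin_bnd a b : Rabs (z * (x * a + b)) <= Rabs z * (Rabs a + Rabs b).
Proof.
rewrite Rabs_mult; apply: Rmult_le_compat_l; first by apply: Rabs_pos.
apply: Rle_trans (Rabs_triang _ _) _; rewrite Rabs_mult.
have := Rabs_pos a; nra.
Qed.

Lemma SF_eq h : SF x z h = fG x z c0 c1 h.
Proof.
apply: Rminus_diag_uniq; move: h.
apply: (contr (fun h => SF x z h - fG x z c0 c1 h) (Rabs z) (2 + Rabs (x/(1-x)) * 4)).
- by apply: Rabs_pos.
- lra.
- move=> h; apply: Rle_trans (Rabs_triang _ _) _; rewrite Rabs_Ropp.
  have := proj2 (exF x z hx1 hz h).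
  have -> : fG x z c0 c1 h = x/(1-x) * (z^h * c0^(h.+1) - z^h * c1^(h.+1)) by rewrite /fG; ring.
  rewrite Rabs_mult.
  have : Rabs (z ^ h * c0 ^ h.+1 - z ^ h * c1 ^ h.+1) <= 4.
    apply: Rle_trans (Rabs_triang _ _) _; rewrite Rabs_Ropp.
    have := pow_abs_le z c0 h ltac:(lra) ltac:(rewrite Rabs_pos_eq; lra).
    have := pow_abs_le z c1 h ltac:(lra) ltac:(rewrite Rabs_pos_eq; lra).
    lra.
  have := Rabs_pos (x / (1-x)); nra.
- rewrite (SF_0 x z hx1 hz) (fG_0 x z c0 c1) // -(SE_eq 1).
  have -> : z * (x * SF x z 1 + x * SE z 1) - z * (x * fG x z c0 c1 1 + x * SE z 1) =
    z * (x * (SF x z 1 - fG x z c0 c1 1) + 0) by ring.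
  by apply: Rle_trans (lin_bnd _ _) _; rewrite Rabs_R0 Rplus_0_r; lra.
- move=> h; rewrite (SF_S x z hx1 hz) (fG_S x z c0 c1) // -(SE_eq h.+2).
  have -> : z * (x * SF x z h.+2 + SF x z h + x * SE z h.+2) -
    z * (x * fG x z c0 c1 h.+2 + fG x z c0 c1 h + x * SE z h.+2) =
    z * (x * (SF x z h.+2 - fG x z c0 c1 h.+2) + (SF x z h - fG x z c0 c1 h)) by ring.
  by apply: lin_bnd.
Qed.

Lemma kG_split h : kG x z c0 c1 h = x/(1-x)/(c0*z^2*(1-x)) * (z^h * c0^(h.+1) - z^h * c1^(h.+1))
   + x/(1-x)*c1^2/(c1-2) * (INR h.+1 * (z*c1)^h).
Proof. rewrite /kG Rpow_mult_distr; ring. Qed.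

Lemma SH_eq h : SH x z h = kG x z c0 c1 h.
Proof.
apply: Rminus_diag_uniq; move: h.
apply: (contr (fun h => SH x z h - kG x z c0 c1 h) (Rabs z)
   (2 + Rabs (x/(1-x)/(c0*z^2*(1-x))) * 4 + Rabs (x/(1-x)*c1^2/(c1-2)))).
- by apply: Rabs_pos.
- lra.
- move=> h; apply: Rle_trans (Rabs_triang _ _) _; rewrite Rabs_Ropp.
  have := proj2 (exH x z hx1 hz h).
  rewrite kG_split.
  have T := Rabs_triang (x/(1-x)/(c0*z^2*(1-x)) * (z^h * c0^(h.+1) - z^h * c1^(h.+1)))
     (x/(1-x)*c1^2/(c1-2) * (INR h.+1 * (z*c1)^h)).
  rewrite !Rabs_mult in T.
  have X4 : Rabs (z ^ h * c0 ^ h.+1 - z ^ h * c1 ^ h.+1) <= 4.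
    apply: Rle_trans (Rabs_triang _ _) _; rewrite Rabs_Ropp.
    have := pow_abs_le z c0 h ltac:(lra) ltac:(rewrite Rabs_pos_eq; lra).
    have := pow_abs_le z c1 h ltac:(lra) ltac:(rewrite Rabs_pos_eq; lra).
    lra.
  have XX1 : Rabs (INR h.+1) * Rabs ((z * c1) ^ h) <= 1.
    rewrite Rabs_pos_eq; last by apply: pos_INR.
    rewrite -RPow_abs; apply: INR_pow_le; split; [apply: Rabs_pos | lra].
  have := Rmult_le_compat_l _ _ _ (Rabs_pos (x/(1-x)/(c0*z^2*(1-x)))) X4.
  have := Rmult_le_compat_l _ _ _ (Rabs_pos (x/(1-x)*c1^2/(c1-2))) XX1.
  rewrite !Rabs_mult.
  lra.
- rewrite (SH_0 x z hx1 hz) (kG_0 x z c0 c1) // -(SE_eq 1) -(SF_eq 1).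
  have -> : z * (x * (SH x z 1 + SF x z 1) + x * SE z 1) -
    z * (x * (kG x z c0 c1 1 + SF x z 1) + x * SE z 1) =
    z * (x * (SH x z 1 - kG x z c0 c1 1) + 0) by ring.
  by apply: Rle_trans (lin_bnd _ _) _; rewrite Rabs_R0 Rplus_0_r; lra.
- move=> h; rewrite (SH_S x z hx1 hz) (kG_S x z c0 c1) // -(SE_eq h.+2) -(SF_eq h.+2) -(SF_eq h).
  have -> : z * (x * (SH x z h.+2 + SF x z h.+2) + (SH x z h + SF x z h) + x * SE z h.+2) -
    z * (x * (kG x z c0 c1 h.+2 + SF x z h.+2) + (kG x z c0 c1 h + SF x z h) + x * SE z h.+2) =
    z * (x * (SH x z h.+2 - kG x z c0 c1 h.+2) + (SH x z h - kG x z c0 c1 h)) by ring.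
  by apply: lin_bnd.
Qed.

Lemma series_nz : is_series (G_term z x) (G_closed_form z x).
Proof.
rewrite -(closed_eq x z hz hx z0) -/s0 -/s1 -/c0 -/c1 -SH_eq.
apply: (is_series_ext (fun n => HH x n 0 * z^n)).
  by move=> n; rewrite /G_term Gsum_HH Rmult_comm.
by apply: Series_correct; case: (exH x z hx1 hz 0).
Qed.
End Main.

Lemma series_main x z : Rabs z <= /16 -> Rabs x <= /2 -> is_series (G_term z x) (G_closed_form z x).
Proof.
move=> hz hx; case: (Req_dec z 0) => [->|z0]; last by apply: series_nz.
have -> : G_closed_form 0 x = 0.
  rewrite /G_closed_form (_ : 1 - 4 * x * 0 ^ 2 = 1); last by ring.
  by rewrite sqrt_1; field; rewrite (_ : 1 - 4 * 0^2 = 1); [rewrite sqrt_1; lra | ring].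
have H0 : is_series (fun n : nat => 0 * (/2)^n) 0.
  have := is_series_scal_l 0 _ _ (is_series_geom (/2) ltac:(rewrite Rabs_pos_eq; lra)).
  by rewrite /scal /= /mult /= Rmult_0_l.
apply: (is_series_ext (fun n : nat => 0 * (/2)^n)); last by [].
case=> [|n]; rewrite /G_term Rmult_0_l; last by rewrite /= Rmult_0_l Rmult_0_l.
by rewrite Gsum_HH /= Rmult_0_r.
Qed.

Definition cP (k i j : nat) : Z :=
  match k, i, j with
  | 0, 4, 2 => (1)%Z
  | 1, 2, 1 => (-1)%Z
  | 1, 4, 1 => (2)%Z
  | 1, 4, 2 => (6)%Z
  | 1, 6, 2 => (-8)%Z
  | 1, 6, 3 => (-8)%Z
  | 2, 2, 1 => (-1)%Z
  | 2, 4, 0 => (1)%Z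
  | 2, 4, 1 => (2)%Z
  | 2, 4, 2 => (9)%Z
  | 2, 6, 1 => (-10)%Z
  | 2, 6, 2 => (-12)%Z
  | 2, 6, 3 => (-26)%Z
  | 2, 8, 2 => (24)%Z
  | 2, 8, 3 => (16)%Z
  | 2, 8, 4 => (24)%Z
  | 3, 4, 0 => (1)%Z
  | 3, 4, 1 => (-2)%Z
  | 3, 4, 2 => (1)%Z
  | 3, 6, 0 => (-2)%Z
  | 3, 6, 1 => (-6)%Z
  | 3, 6, 2 => (18)%Z
  | 3, 6, 3 => (-10)%Z
  | 3, 8, 1 => (16)%Z
  | 3, 8, 3 => (-48)%Z
  | 3, 8, 4 => (32)%Z
  | 3, 10, 2 => (-32)%Z
  | 3, 10, 3 => (32)%Z
  | 3, 10, 4 => (32)%Z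
  | 3, 10, 5 => (-32)%Z
  | 4, 8, 0 => (1)%Z
  | 4, 8, 1 => (-4)%Z
  | 4, 8, 2 => (6)%Z
  | 4, 8, 3 => (-4)%Z
  | 4, 8, 4 => (1)%Z
  | 4, 10, 1 => (-8)%Z
  | 4, 10, 2 => (32)%Z
  | 4, 10, 3 => (-48)%Z
  | 4, 10, 4 => (32)%Z
  | 4, 10, 5 => (-8)%Z
  | 4, 12, 2 => (16)%Z
  | 4, 12, 3 => (-64)%Z
  | 4, 12, 4 => (96)%Z
  | 4, 12, 5 => (-64)%Z
  | 4, 12, 6 => (16)%Z
  | _, _, _ => (0)%Z
  end.

Definition quartic (y A B : R) := ((4*y^2*A^2*B + 4 - A*(y*(A+B)+2)^2)^2 - 64*y^2*A^2*B)/256.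

Lemma cP_eval z x y : poly3_eval 4 12 cP z x y = quartic y (1 - 4*x*z^2) (1 - 4*z^2).
Proof. rewrite /poly3_eval /quartic /=; field. Qed.

Lemma quart_id y a b : quartic y (a*a) (b*b) =
  (y*a*(a+b)^2 - 2*(1-a)) * (y*a*(a-b)^2 - 2*(1-a)) *
  (-y*a*(-a+b)^2 - 2*(1+a)) * (-y*a*(-a-b)^2 - 2*(1+a)) / 256.
Proof. rewrite /quartic; field. Qed.

Lemma G_eq z x : Rabs z < /16 -> Rabs x < /16 -> G z x = G_closed_form z x.
Proof. move=> hz hx; rewrite /G; apply: is_series_unique; apply: series_main; lra. Qed.

Lemma closed_root z x : Rabs z < /16 -> Rabs x < /16 ->
  poly3_eval 4 12 cP z x (G_closed_form z x) = 0.
Proof.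
move=> hz hx.
have hx' : -/16 <= x <= /16 by move: hx; rewrite /Rabs; case: Rcase_abs; lra.
have z2 : z^2 <= /256.
  have : Rabs z ^ 2 <= (/16)^2 by apply: pow_incr; split; [apply: Rabs_pos | lra].
  by rewrite RPow_abs Rabs_pos_eq; [lra | apply: pow2_ge_0].
have z20 : 0 <= z^2 by apply: pow2_ge_0.
rewrite cP_eval /G_closed_form.
set a := sqrt (1 - 4 * x * z ^ 2); set b := sqrt (1 - 4 * z ^ 2).
have Ha : a * a = 1 - 4 * x * z ^ 2 by apply: sqrt_sqrt; nra.
have Hb : b * b = 1 - 4 * z ^ 2 by apply: sqrt_sqrt; nra.
have Pa : 0 < a by apply: sqrt_lt_R0; nra.
have Pb : 0 < b by apply: sqrt_lt_R0; nra.
rewrite -Ha -Hb quart_id.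
have -> : 2 * (1 - a) / (a * (b + a) ^ 2) * a * (a + b) ^ 2 - 2 * (1 - a) = 0.
  field; nra.
rewrite !Rmult_0_l; lra.
Qed.

Lemma part1 : exists (N : nat) (c : nat -> nat -> nat -> Z),
      (exists i j : nat, (i <= N)%nat /\ (j <= N)%nat /\ c 4%nat i j <> 0%Z) /\
      near00 (fun z x => poly3_eval 4 N c z x (G z x) = 0).
Proof.
exists 12%nat, cP; split.
  by exists 8%nat, 0%nat; split; [by [] | split; [by [] | compute; discriminate]].
exists (/16); split; first lra.
by move=> z x hz hx; rewrite G_eq // closed_root.
Qed.

From mathcomp Require Import all_algebra.
From mathcomp Require Import Rstruct.
Import GRing.Theory.
Local Open Scope ring_scope.
Local Open Scope R_scope.


Lemma poly_interval_zero (p : {poly R}) a b : a < b ->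
  (forall u, a < u < b -> p.[u] = 0) -> p = 0%R.
Proof.
move=> ab H; apply/eqP; apply: contraT => pn0.
pose s := [seq a + (b - a) / (INR i + 2) | i <- iota 0 (size p)].
have := max_poly_roots pn0 (rs := s).
rewrite size_map size_iota ltnn; apply.
  apply/allP => u /mapP [i _ ->]; apply/rootP.
  have Hi := pos_INR i.
  apply: H; split.
    have : 0 < (b - a) / (INR i + 2) by apply: Rdiv_lt_0_compat; lra.
    lra.
  have : (b - a) / (INR i + 2) < b - a.
    apply: (Rmult_lt_reg_r (INR i + 2)); first lra.
    rewrite /Rdiv Rmult_assoc Rinv_l; nra.
  lra.
rewrite map_inj_uniq ?iota_uniq // => i j E.
have Hi := pos_INR i; have Hj := pos_INR j.
have E' : (b - a) / (INR i + 2) = (b - a) / (INR j + 2) by lra.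
have : INR i + 2 = INR j + 2.
  apply: Rinv_eq_reg.
  apply: (Rmult_eq_reg_l (b - a)); last lra.
  by rewrite -!/(Rdiv _ _).
move=> Eij; apply: INR_eq; lra.
Qed.

Definition israt (B : R -> Prop) (f : R -> R) :=
  exists p q : {poly R}, forall u, ~ B u -> q.[u] <> 0 /\ f u = p.[u] / q.[u].

Section Rat.
Variable B : R -> Prop.

Lemma rat_const c : israt B (fun _ => c).
Proof.
exists c%:P, 1%:P => u _; rewrite !hornerC; split; first exact: R1_neq_R0.
by rewrite /Rdiv (Rinv_1 : / (1%R) = 1) Rmult_1_r.
Qed.

Lemma rat_id : israt B (fun u => u).
Proof.
exists 'X, 1%:P => u _; rewrite hornerX hornerC; split; first exact: R1_neq_R0.
by rewrite /Rdiv (Rinv_1 : / (1%R) = 1) Rmult_1_r.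
Qed.

Lemma rat_add f g : israt B f -> israt B g -> israt B (fun u => f u + g u).
Proof.
move=> [p1 [q1 H1]] [p2 [q2 H2]].
exists (p1 * q2 + p2 * q1)%R, (q1 * q2)%R => u Bu.
have [n1 e1] := H1 u Bu; have [n2 e2] := H2 u Bu.
rewrite hornerD !hornerM -!RmultE -!RplusE e1 e2; split.
  by apply: Rmult_integral_contrapositive_currified.
have E : forall a1 b1 a2 b2 : R, b1 <> 0 -> b2 <> 0 -> a1/b1 + a2/b2 = (a1*b2 + a2*b1)/(b1*b2).
  by move=> *; field.
exact: E.
Qed.

Lemma rat_mul f g : israt B f -> israt B g -> israt B (fun u => f u * g u).
Proof.
move=> [p1 [q1 H1]] [p2 [q2 H2]].
exists (p1 * p2)%R, (q1 * q2)%R => u Bu.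
have [n1 e1] := H1 u Bu; have [n2 e2] := H2 u Bu.
rewrite !hornerM -!RmultE e1 e2; split.
  by apply: Rmult_integral_contrapositive_currified.
have E : forall a1 b1 a2 b2 : R, b1 <> 0 -> b2 <> 0 -> a1/b1 * (a2/b2) = (a1*a2)/(b1*b2).
  by move=> *; field.
exact: E.
Qed.

Lemma rat_opp f : israt B f -> israt B (fun u => - f u).
Proof.
move=> [p1 [q1 H1]].
exists (- p1)%R, q1 => u Bu.
have [n1 e1] := H1 u Bu.
rewrite hornerN -RoppE e1; split => //.
have E : forall a1 b1 : R, b1 <> 0 -> - (a1/b1) = (- a1)/b1 by move=> *; field.
exact: E.
Qed.

Lemma rat_sub f g : israt B f -> israt B g -> israt B (fun u => f u - g u).
Proof. by move=> H1 H2; apply: rat_add => //; apply: rat_opp. Qed.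

Lemma rat_div f g : israt B f -> israt B g -> (forall u, ~ B u -> g u <> 0) ->
  israt B (fun u => f u / g u).
Proof.
move=> [p1 [q1 H1]] [p2 [q2 H2]] Hg.
exists (p1 * q2)%R, (q1 * p2)%R => u Bu.
have [n1 e1] := H1 u Bu; have [n2 e2] := H2 u Bu.
have gn := Hg u Bu.
have pn : p2.[u] <> 0.
  move=> E; apply: gn; rewrite e2 E /Rdiv Rmult_0_l; lra.
rewrite !hornerM -!RmultE e1 e2; split.
  by apply: Rmult_integral_contrapositive_currified.
have E : forall a1 b1 a2 b2 : R, b1 <> 0 -> b2 <> 0 -> a2 <> 0 -> a1/b1 / (a2/b2) = (a1*b2)/(b1*a2).
  by move=> *; field.
exact: E.
Qed.

Lemma rat_pow f n : israt B f -> israt B (fun u => f u ^ n).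
Proof.
move=> H; elim: n => [|n IH] /=; first by apply: rat_const.
by apply: rat_mul.
Qed.

Lemma rat_sum (F : nat -> R -> R) n : (forall k, israt B (F k)) ->
  israt B (fun u => sum_f_R0 (fun k => F k u) n).
Proof.
move=> H; elim: n => [|n IH] /=; first by apply: H.
by apply: rat_add.
Qed.

Lemma rat_zero f a b : a < b -> israt B f ->
  (forall u, a < u < b -> ~ B u /\ f u = 0) -> forall u, ~ B u -> f u = 0.
Proof.
move=> ab [p [q H]] Hz.
have p0 : p = 0%R.
  apply: (@poly_interval_zero p a b ab) => u Hu.
  have [Bu fu] := Hz u Hu; have [qn e] := H u Bu.
  rewrite fu in e.
  have := f_equal (fun v => v * q.[u]) e; rewrite /Rdiv Rmult_assoc Rinv_l //; lra.
move=> u Bu; have [qn e] := H u Bu; rewrite e p0 horner0 /Rdiv Rmult_0_l //.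
Qed.
End Rat.

Lemma diff_fac p0 p1 p2 p3 y1 y2 :
  (p0 + p1*y1 + p2*y1^2 + p3*y1^3) - (p0 + p1*y2 + p2*y2^2 + p3*y2^3) =
  (y1 - y2) * (p1 + p2*(y1+y2) + p3*(y1^2 + y1*y2 + y2^2)).
Proof. ring. Qed.


Lemma vander p0 p1 p2 p3 y1 y2 y3 y4 :
  y1 <> y2 -> y1 <> y3 -> y1 <> y4 -> y2 <> y3 -> y2 <> y4 -> y3 <> y4 ->
  (forall y, y = y1 \/ y = y2 \/ y = y3 \/ y = y4 -> p0 + p1*y + p2*y^2 + p3*y^3 = 0) ->
  p0 = 0 /\ p1 = 0 /\ p2 = 0 /\ p3 = 0.
Proof.
move=> d12 d13 d14 d23 d24 d34 H.
have E1 := H y1 ltac:(tauto); have E2 := H y2 ltac:(tauto).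
have E3 := H y3 ltac:(tauto); have E4 := H y4 ltac:(tauto).
have F12 : p1 + p2*(y1+y2) + p3*(y1^2 + y1*y2 + y2^2) = 0.
  apply: (@Rmult_eq_reg_l (y1 - y2)); last lra.
  by rewrite -(diff_fac p0 p1 p2 p3) E1 E2; ring.
have F13 : p1 + p2*(y1+y3) + p3*(y1^2 + y1*y3 + y3^2) = 0.
  apply: (@Rmult_eq_reg_l (y1 - y3)); last lra.
  by rewrite -(diff_fac p0 p1 p2 p3) E1 E3; ring.
have F14 : p1 + p2*(y1+y4) + p3*(y1^2 + y1*y4 + y4^2) = 0.
  apply: (@Rmult_eq_reg_l (y1 - y4)); last lra.
  by rewrite -(diff_fac p0 p1 p2 p3) E1 E4; ring.
have G23 : p2 + p3*(y1 + y2 + y3) = 0.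
  apply: (@Rmult_eq_reg_l (y2 - y3)); last lra.
  rewrite Rmult_0_r -(Rminus_diag_eq _ _ (eq_trans F12 (esym F13))); ring.
have G24 : p2 + p3*(y1 + y2 + y4) = 0.
  apply: (@Rmult_eq_reg_l (y2 - y4)); last lra.
  rewrite Rmult_0_r -(Rminus_diag_eq _ _ (eq_trans F12 (esym F14))); ring.
have P3 : p3 = 0.
  apply: (@Rmult_eq_reg_l (y3 - y4)); last lra.
  rewrite Rmult_0_r -(Rminus_diag_eq _ _ (eq_trans G23 (esym G24))); ring.
have P2 : p2 = 0 by rewrite P3 in G23; lra.
have P1 : p1 = 0 by rewrite P3 P2 in F12; lra.
have P0 : p0 = 0 by rewrite P3 P2 P1 in E1; lra.
by [].
Qed.

Lemma sumf_ring (f : nat -> R) N : sum_f_R0 f N = (\sum_(i < N.+1) f i)%R.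
Proof.
elim: N => [|N IH] /=; first by rewrite big_ord_recr big_ord0 /= add0r.
by rewrite big_ord_recr /= IH.
Qed.

Lemma coef_zero (d : nat -> R) N a b : a < b ->
  (forall u, a < u < b -> sum_f_R0 (fun i => d i * u ^ i) N = 0) ->
  forall i, (i <= N)%N -> d i = 0.
Proof.
move=> ab H i iN.
have p0 : \poly_(i < N.+1) d i = 0%R.
  apply: (@poly_interval_zero _ a b ab) => u Hu.
  rewrite horner_poly -(H u Hu) sumf_ring; apply: eq_bigr => k _.
  by rewrite RpowE.
have := congr1 (fun p : {poly R} => p`_i) p0.
by rewrite coef_poly coef0 ltnS iN.
Qed.

Definition pk (c : nat -> nat -> nat -> Z) N k z x :=
  sum_f_R0 (fun i => sum_f_R0 (fun j => IZR (c k i j) * z ^ i * x ^ j) N) N.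
Definition Qc c N z x y := sum_f_R0 (fun k => pk c N k z x * y ^ k) 3.
Definition Gam a b := 2 * (1 - a) / (a * (b + a) ^ 2).
Definition zu u := u / (1 + u^2).
Definition bu u := (1 - u^2) / (1 + u^2).
Definition xu a u := (1 - a^2) / (4 * zu u ^ 2).

Lemma rat_pk B c N k (zf xf : R -> R) : israt B zf -> israt B xf ->
  israt B (fun u => pk c N k (zf u) (xf u)).
Proof.
move=> Hz Hx; rewrite /pk.
apply: (rat_sum _ (fun i u => sum_f_R0 (fun j => IZR (c k i j) * zf u ^ i * xf u ^ j) N)) => i.
apply: (rat_sum _ (fun j u => IZR (c k i j) * zf u ^ i * xf u ^ j)) => j.
apply: rat_mul; last by apply: rat_pow.
by apply: rat_mul; [apply: rat_const | apply: rat_pow].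
Qed.

Lemma rat_Q B c N (zf xf yf : R -> R) : israt B zf -> israt B xf -> israt B yf ->
  israt B (fun u => Qc c N (zf u) (xf u) (yf u)).
Proof.
move=> Hz Hx Hy; rewrite /Qc.
apply: (rat_sum _ (fun k u => pk c N k (zf u) (xf u) * yf u ^ k)) => k.
by apply: rat_mul; [apply: rat_pk | apply: rat_pow].
Qed.

Lemma Qc_expand c N z x y : Qc c N z x y =
  pk c N 0 z x + pk c N 1 z x * y + pk c N 2 z x * y^2 + pk c N 3 z x * y^3.
Proof. rewrite /Qc /=; ring. Qed.

Lemma zu_pos u : 0 < u -> 0 < zu u /\ zu u <= u.
Proof.
move=> H; rewrite /zu; have h2 : 0 <= u^2 by apply: pow2_ge_0.
split; first by apply: Rdiv_lt_0_compat; lra.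
apply: (Rmult_le_reg_r (1 + u^2)); first lra.
rewrite /Rdiv Rmult_assoc Rinv_l; nra.
Qed.

Lemma bu_sq u : 1 - 4 * zu u ^ 2 = bu u ^ 2.
Proof. rewrite /zu /bu; field; have := pow2_ge_0 u; lra. Qed.

Lemma bu_pos u : 0 < u < 1 -> 0 < bu u.
Proof.
move=> H; rewrite /bu; apply: Rdiv_lt_0_compat; have := pow2_ge_0 u; try nra.
Qed.

Lemma xu_sq a u : u <> 0 -> 1 - 4 * xu a u * zu u ^ 2 = a ^ 2.
Proof.
move=> H; rewrite /xu /zu; field; split => //; have := pow2_ge_0 u; lra.
Qed.

Lemma zu_inv u : u <> 0 -> zu (/ u) = zu u.
Proof. move=> H; rewrite /zu; field; split => //; have := pow2_ge_0 u; nra. Qed.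

Lemma bu_inv u : u <> 0 -> bu (/ u) = - bu u.
Proof. move=> H; rewrite /bu; field; split => //; have := pow2_ge_0 u; nra. Qed.

Lemma xu_inv a u : u <> 0 -> xu a (/ u) = xu a u.
Proof. by move=> H; rewrite /xu zu_inv. Qed.

Lemma xu_mono a u0 u : 0 < a < 1 -> 0 < u0 <= u -> u <= 1 -> xu a u <= xu a u0.
Proof.
move=> Ha Hu0 Hu1.
have E : forall v, 0 < v -> xu a v = (1 - a^2) / 4 * (v + / v) ^ 2.
  move=> v Hv; rewrite /xu /zu; field; split; [lra | have := pow2_ge_0 v; lra].
rewrite !E; try lra.
have Ha2 : a^2 < 1 by nra.
apply: Rmult_le_compat_l; first lra.
apply: pow_incr; split.
  by have := Rinv_0_lt_compat u ltac:(lra); lra.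
have : / u0 - / u >= u - u0.
  have -> : / u0 - / u = (u - u0) / (u * u0) by field; lra.
  have Hp : 0 < u * u0 by nra.
  have : (u - u0) / (u * u0) - (u - u0) = (u - u0) * (1 - u * u0) / (u * u0) by field; lra.
  have : 0 <= (u - u0) * (1 - u * u0) / (u * u0).
    apply: Rmult_le_pos; [apply: Rmult_le_pos; nra | by left; apply: Rinv_0_lt_compat].
  lra.
lra.
Qed.

Lemma sqrt_sq_pos v : 0 <= v -> sqrt (v ^ 2) = v.
Proof. by move=> H; apply: sqrt_pow2. Qed.

Section Min.
Variables (c : nat -> nat -> nat -> Z) (N : nat) (eps : R).
Hypothesis eps0 : 0 < eps.
Hypothesis eps16 : eps <= /16.
Hypothesis HQ : forall z x, Rabs z < eps -> Rabs x < eps ->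
  Qc c N z x (Gam (sqrt (1 - 4 * x * z ^ 2)) (sqrt (1 - 4 * z ^ 2))) = 0.

Lemma claimA a u : 0 < a < 1 -> 0 < u < 1 -> u < eps -> xu a u < eps ->
  Qc c N (zu u) (xu a u) (Gam a (bu u)) = 0.
Proof.
move=> Ha Hu Hue Hxe.
have [zp zl] := zu_pos u ltac:(lra).
have xp : 0 < xu a u.
  rewrite /xu; apply: Rdiv_lt_0_compat; [nra | have := pow2_gt_0 (zu u) ltac:(lra); lra].
have := HQ (zu u) (xu a u).
rewrite xu_sq; last lra.
rewrite bu_sq !sqrt_sq_pos; [|by left; apply: bu_pos | lra].
apply; rewrite Rabs_pos_eq; lra.
Qed.

Lemma israt_zu B : israt B zu.
Proof.
rewrite /zu; apply: (rat_div B (fun u => u) (fun u => 1 + u^2)).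
- exact: rat_id.
- apply: (rat_add B (fun _ => 1) (fun u => u^2)); first exact: rat_const.
  apply: (rat_pow B (fun u => u)); exact: rat_id.
- by move=> u _; have := pow2_ge_0 u; lra.
Qed.

Lemma israt_bu B : israt B bu.
Proof.
rewrite /bu; apply: (rat_div B (fun u => 1 - u^2) (fun u => 1 + u^2)).
- apply: (rat_sub B (fun _ => 1) (fun u => u^2)); first exact: rat_const.
  apply: (rat_pow B (fun u => u)); exact: rat_id.
- apply: (rat_add B (fun _ => 1) (fun u => u^2)); first exact: rat_const.
  apply: (rat_pow B (fun u => u)); exact: rat_id.
- by move=> u _; have := pow2_ge_0 u; lra.
Qed.

Lemma israt_xu B a : (forall u, ~ B u -> u <> 0) -> israt B (xu a).
Proof.
move=> HB; rewrite /xu; apply: (rat_div B (fun _ => 1 - a^2) (fun u => 4 * zu u ^ 2)).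
- exact: rat_const.
- apply: (rat_mul B (fun _ => 4) (fun u => zu u ^ 2)); first exact: rat_const.
  apply: (rat_pow B zu); exact: israt_zu.
- move=> u Bu; have := HB u Bu => un.
  have zn : zu u <> 0.
    rewrite /zu /Rdiv; apply: Rmult_integral_contrapositive_currified => //.
    by apply: Rinv_neq_0_compat; have := pow2_ge_0 u; lra.
  apply: Rmult_integral_contrapositive_currified; [lra | by apply: pow_nonzero].
Qed.

Lemma israt_Gam B (af bf : R -> R) : israt B af -> israt B bf ->
  (forall u, ~ B u -> af u * (bf u + af u) ^ 2 <> 0) ->
  israt B (fun u => Gam (af u) (bf u)).
Proof.
move=> Ha Hb Hn; rewrite /Gam.
apply: (rat_div B (fun u => 2 * (1 - af u)) (fun u => af u * (bf u + af u) ^ 2)) => //.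
- apply: (rat_mul B (fun _ => 2) (fun u => 1 - af u)); first exact: rat_const.
  by apply: (rat_sub B (fun _ => 1)); first exact: rat_const.
- apply: (rat_mul B af (fun u => (bf u + af u) ^ 2)) => //.
  by apply: (rat_pow B (fun u => bf u + af u)); apply: rat_add.
Qed.

Lemma pt_facts z0 x0 : 0 < z0 < eps/4 -> 0 < x0 < eps/4 ->
  let a0 := sqrt (1 - 4*x0*z0^2) in let b0 := sqrt (1 - 4*z0^2) in
  0 < b0 /\ b0 < a0 /\ a0 < 1 /\ a0 * a0 = 1 - 4*x0*z0^2 /\ b0 * b0 = 1 - 4*z0^2.
Proof.
move=> Hz Hx a0 b0.
have z2 : 0 < z0^2 by apply: pow_lt; lra.
have h64 : z0 < /64 by lra.
have z2' : z0^2 < /256 by nra.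
have A0 : a0 * a0 = 1 - 4*x0*z0^2 by apply: sqrt_sqrt; nra.
have B0 : b0 * b0 = 1 - 4*z0^2 by apply: sqrt_sqrt; nra.
have a0p : 0 < a0 by apply: sqrt_lt_R0; nra.
have b0p : 0 < b0 by apply: sqrt_lt_R0; nra.
split => //; split; [nra | split => //; nra].
Qed.

Lemma claimB z0 x0 : 0 < z0 < eps/4 -> 0 < x0 < eps/4 ->
  Qc c N z0 x0 (Gam (sqrt (1 - 4*x0*z0^2)) (- sqrt (1 - 4*z0^2))) = 0.
Proof.
move=> Hz Hx.
have [b0p [ab [a01 [A0 B0]]]] := pt_facts z0 x0 Hz Hx.
set a0 := sqrt (1 - 4*x0*z0^2) in b0p ab a01 A0 B0 *.
set b0 := sqrt (1 - 4*z0^2) in b0p ab a01 A0 B0 *.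
have a0p : 0 < a0 by lra.
have Z : z0^2 = (1 - b0*b0)/4 by lra.
set u0 := 2*z0/(1+b0).
have u0p : 0 < u0 < 2*z0.
  rewrite /u0; split; first by apply: Rdiv_lt_0_compat; lra.
  apply: (Rmult_lt_reg_r (1 + b0)); first lra.
  rewrite /Rdiv Rmult_assoc Rinv_l; nra.
have U2 : u0^2 = 4 * z0^2/(1+b0)^2 by rewrite /u0; field; lra.
have E1 : 1 + u0^2 = 2/(1+b0) by rewrite U2 Z; field; lra.
have zu0 : zu u0 = z0 by rewrite /zu E1 /u0; field; lra.
have bu0 : bu u0 = b0 by rewrite /bu E1 U2 Z; field; lra.
have xu0 : xu a0 u0 = x0.
  rewrite /xu zu0 (_ : a0^2 = a0 * a0); last by ring.
  by rewrite A0; field; apply: Rgt_not_eq; lra.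
pose B := fun u => u = 0 \/ bu u + a0 = 0.
pose f := fun u => Qc c N (zu u) (xu a0 u) (Gam a0 (bu u)).
have Hrat : israt B f.
  apply: (rat_Q B c N zu (xu a0) (fun u => Gam a0 (bu u))).
  - exact: israt_zu.
  - by apply: israt_xu => u Bu E; apply: Bu; left.
  - apply: (israt_Gam B (fun _ => a0) bu); [exact: rat_const | exact: israt_bu |].
    move=> u Bu; apply: Rmult_integral_contrapositive_currified; first lra.
    by apply: pow_nonzero => E; apply: Bu; right.
have H0 := rat_zero B f u0 (eps/2) ltac:(lra) Hrat.
have := H0 _ (/ u0).
rewrite /f zu_inv ?xu_inv ?bu_inv ?zu0 ?xu0 ?bu0; try lra.
apply.
- move=> u Hu.
  have bup : 0 < bu u by apply: bu_pos; lra.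
  split; first by rewrite /B; case; lra.
  apply: claimA; try lra.
  apply: Rle_lt_trans (xu_mono a0 u0 u _ _ _) _; lra.
- rewrite /B => -[E|E].
    by have := Rinv_neq_0_compat u0 ltac:(lra); rewrite E.
  by rewrite bu_inv ?bu0 in E; lra.
Qed.

Lemma claimC z0 x0 bb : 0 < z0 < eps/4 -> 0 < x0 < eps/4 -> Rabs bb = sqrt (1 - 4*z0^2) ->
  (forall x', 0 < x' < eps/4 -> Qc c N z0 x' (Gam (sqrt (1 - 4*x'*z0^2)) bb) = 0) ->
  Qc c N z0 x0 (Gam (- sqrt (1 - 4*x0*z0^2)) bb) = 0.
Proof.
move=> Hz Hx Hbb Hyp.
have [b0p [ab [a01 [A0 B0]]]] := pt_facts z0 x0 Hz Hx.
rewrite -Hbb in b0p ab B0.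
set a0 := sqrt (1 - 4*x0*z0^2) in ab a01 A0 *.
have a0p : 0 < a0 by lra.
have bbb : - Rabs bb <= bb <= Rabs bb by move: (Rle_abs bb) (Rle_abs (- bb)); rewrite Rabs_Ropp; lra.
have z2 : 0 < z0^2 by apply: pow_lt; lra.
pose xa a := (1 - a^2)/(4*z0^2).
have xaE : forall a, 1 - 4 * xa a * z0^2 = a^2 by move=> a; rewrite /xa; field; apply: Rgt_not_eq; lra.
have xa0 : xa (- a0) = x0.
  rewrite /xa (_ : (- a0)^2 = a0 * a0); last by ring.
  by rewrite A0; field; apply: Rgt_not_eq; lra.
pose B := fun a => a = 0 \/ bb + a = 0.
pose f := fun a => Qc c N z0 (xa a) (Gam a bb).
have Hrat : israt B f.
  apply: (rat_Q B c N (fun _ => z0) xa (fun a => Gam a bb)).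
  - exact: rat_const.
  - apply: (rat_div B (fun a => 1 - a^2) (fun _ => 4*z0^2)).
    + apply: (rat_sub B (fun _ => 1) (fun a => a^2)); first exact: rat_const.
      apply: (rat_pow B (fun a => a)); exact: rat_id.
    + exact: rat_const.
    + by move=> _ _; lra.
  - apply: (israt_Gam B (fun a => a) (fun _ => bb)); [exact: rat_id | exact: rat_const |].
    move=> a Ba; apply: Rmult_integral_contrapositive_currified.
      by move=> E; apply: Ba; left.
    by apply: pow_nonzero => E; apply: Ba; right.
have H0 := rat_zero B f a0 1 a01 Hrat.
have := H0 _ (- a0).
rewrite /f xa0; apply.
- move=> a Ha.
  split; first by rewrite /B; case; lra.
  have := Hyp (xa a).
  rewrite xaE sqrt_pow2; last lra.
  apply; split.
    rewrite /xa; apply: Rdiv_lt_0_compat; nra.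
  have : xa a < xa a0.
    rewrite /xa; apply: Rmult_lt_compat_r; first by apply: Rinv_0_lt_compat; lra.
    nra.
  rewrite (_ : xa a0 = x0); first lra.
  rewrite /xa (_ : a0^2 = a0 * a0); last by ring.
  by rewrite A0; field; apply: Rgt_not_eq; lra.
- by rewrite /B; case; lra.
Qed.

Lemma div_lt K d1 d2 : 0 < K -> 0 < d1 < d2 -> K / d2 < K / d1.
Proof.
move=> HK [H1 H2]; apply: Rmult_lt_compat_l => //.
by apply: Rinv_lt_contravar => //; nra.
Qed.

Lemma pk_zero z0 x0 : 0 < z0 < eps/4 -> 0 < x0 < eps/4 ->
  forall k, (k <= 3)%N -> pk c N k z0 x0 = 0.
Proof.
move=> Hz Hx.
have [b0p [ab [a01 [A0 B0]]]] := pt_facts z0 x0 Hz Hx.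
have E1 : Qc c N z0 x0 (Gam (sqrt (1 - 4*x0*z0^2)) (sqrt (1 - 4*z0^2))) = 0.
  by apply: HQ; rewrite Rabs_pos_eq; lra.
have E2 := claimB z0 x0 Hz Hx.
have E3 : Qc c N z0 x0 (Gam (- sqrt (1 - 4*x0*z0^2)) (sqrt (1 - 4*z0^2))) = 0.
  apply: claimC => //; first by rewrite Rabs_pos_eq; lra.
  by move=> x' Hx'; apply: HQ; rewrite Rabs_pos_eq; lra.
have E4 : Qc c N z0 x0 (Gam (- sqrt (1 - 4*x0*z0^2)) (- sqrt (1 - 4*z0^2))) = 0.
  apply: claimC => //; first by rewrite Rabs_Ropp Rabs_pos_eq; lra.
  by move=> x' Hx'; apply: claimB.
move: E1 E2 E3 E4 b0p ab a01.
set a0 := sqrt (1 - 4*x0*z0^2); set b0 := sqrt (1 - 4*z0^2).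
move=> E1 E2 E3 E4 b0p ab a01.
have a0p : 0 < a0 by lra.
have D1 : 0 < a0 * (- b0 + a0)^2 < a0 * (b0 + a0)^2.
  split; first by apply: Rmult_lt_0_compat => //; apply: pow_lt; lra.
  apply: Rmult_lt_compat_l => //; nra.
have G3 : Gam (- a0) b0 = - (2 * (1 + a0) / (a0 * (- b0 + a0)^2)).
  rewrite /Gam; field; repeat split; (apply: Rgt_not_eq; lra) || (apply: Rlt_not_eq; lra).
have G4 : Gam (- a0) (- b0) = - (2 * (1 + a0) / (a0 * (b0 + a0)^2)).
  rewrite /Gam; field; repeat split; (apply: Rgt_not_eq; lra) || (apply: Rlt_not_eq; lra).
have L12 : Gam a0 b0 < Gam a0 (- b0) by rewrite /Gam; apply: div_lt; lra.
have L34 : Gam (- a0) b0 < Gam (- a0) (- b0).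
  by rewrite G3 G4; apply: Ropp_lt_contravar; apply: div_lt; lra.
have P1 : 0 < Gam a0 b0.
  by rewrite /Gam; apply: Rdiv_lt_0_compat; [lra | apply: Rmult_lt_0_compat => //; apply: pow_lt; lra].
have P4 : Gam (- a0) (- b0) < 0.
  rewrite G4; apply: Ropp_lt_gt_0_contravar.
  by apply: Rdiv_lt_0_compat; [lra | apply: Rmult_lt_0_compat => //; apply: pow_lt; lra].
have := vander (pk c N 0 z0 x0) (pk c N 1 z0 x0) (pk c N 2 z0 x0) (pk c N 3 z0 x0)
  (Gam a0 b0) (Gam a0 (- b0)) (Gam (- a0) b0) (Gam (- a0) (- b0)).
case; try lra.
  by move=> y [->|[->|[->|->]]]; rewrite -Qc_expand.
move=> p0 [p1 [p2 p3]].
by case=> [|[|[|[|k]]]].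
Qed.

Lemma sum_mul_r (a : nat -> R) w M : sum_f_R0 (fun j => a j * w) M = sum_f_R0 a M * w.
Proof. elim: M => [|M IH] /=; [by [] | rewrite IH; ring]. Qed.

Lemma coef_all k i j : (k <= 3)%N -> (i <= N)%N -> (j <= N)%N -> c k i j = Z0.
Proof.
move=> hk hi hj.
have Hd : forall x0, 0 < x0 < eps/4 -> sum_f_R0 (fun j => IZR (c k i j) * x0 ^ j) N = 0.
  move=> x0 Hx0.
  apply: (coef_zero (fun i => sum_f_R0 (fun j => IZR (c k i j) * x0 ^ j) N) N 0 (eps/4)) => //.
    lra.
  move=> z Hz; rewrite -(pk_zero z x0 Hz Hx0 k hk) /pk.
  apply: PartSum.sum_eq => i' _; rewrite -sum_mul_r; apply: PartSum.sum_eq => j' _; ring.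
apply: eq_IZR_R0.
by apply: (coef_zero (fun j => IZR (c k i j)) N 0 (eps/4)) => //; lra.
Qed.
End Min.

Lemma poly3_eq d' N (c : nat -> nat -> nat -> Z) z x y : (d' < 4)%N ->
  poly3_eval d' N c z x y =
  Qc (fun k i j => if (k <= d')%N then c k i j else Z0) N z x y.
Proof.
move=> hd.
have Ek : forall k, pk (fun k i j => if (k <= d')%N then c k i j else Z0) N k z x =
   if (k <= d')%N then pk c N k z x else 0.
  move=> k; rewrite /pk; case: (k <= d')%N => //.
  apply: sum_eq_R0 => i _; apply: sum_eq_R0 => j _; rewrite /=; ring.
change (sum_f_R0 (fun k => pk c N k z x * y ^ k) d' =
  sum_f_R0 (fun k => pk (fun k i j => if (k <= d')%N then c k i j else Z0) N k z x * y ^ k) 3).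
rewrite /= !Ek.
by case: d' hd {Ek} => [|[|[|[|d']]]] //= _; ring.
Qed.

Lemma part2 : forall (d' N : nat) (c : nat -> nat -> nat -> Z), (d' < 4)%nat ->
      near00 (fun z x => poly3_eval d' N c z x (G z x) = 0) ->
      forall k i j : nat, (k <= d')%nat -> (i <= N)%nat -> (j <= N)%nat ->
        c k i j = Z0.
Proof.
move=> d' N c hd [eps [ep H]] k i j hk hi hj.
pose c3 := fun k i j => if (k <= d')%N then c k i j else Z0.
have m1 : Rmin eps (/16) <= eps by apply: Rmin_l.
have m2 : Rmin eps (/16) <= /16 by apply: Rmin_r.
have m0 : 0 < Rmin eps (/16) by apply: Rmin_glb_lt; lra.
have HQ : forall z x, Rabs z < Rmin eps (/16) -> Rabs x < Rmin eps (/16) ->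
  Qc c3 N z x (Gam (sqrt (1 - 4 * x * z ^ 2)) (sqrt (1 - 4 * z ^ 2))) = 0.
  move=> z x hz hx.
  have := H z x ltac:(lra) ltac:(lra).
  by rewrite G_eq; [rewrite poly3_eq | lra | lra].
have := coef_all c3 N (Rmin eps (/16)) m0 m2 HQ k i j _ hi hj.
rewrite /c3 hk; apply.
by apply: leq_trans hk _; rewrite -ltnS.
Qed.

Theorem proposition15 :
  algebraic_of_degree 4 G /\
  near00 (fun z x => is_series (G_term z x) (G_closed_form z x)).
Proof.
split; first by split; [exact: part1 | exact: part2].
exists (/16); split; first lra.
by move=> z x hz hx; apply: series_main; lra.
Qed.
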